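(* For every edge $S\xrightarrow{i}T$ of $L^{\mathrm{skew}}_{A_{n-1}}(P/Q)$, the numbers $X_{T,S}$ and $Y_{S,T}$ defined below (all of whose denominators are nonzero) are positive rational numbers.
   Context: Fix integers $m\ge n\ge 2$ and weakly decreasing $m$-tuples of nonnegative integers $P=(P_1,\dots,P_m)$ and $Q=(Q_1,\dots,Q_m)$ with $Q_r\le P_r$ for all $r$. The skew shape $P/Q$ is the set of cells $(r,c)$ (row $r$, column $c$, matrix convention) with $Q_r<c\le P_r$; assume no column of $P/Q$ contains more than $n$ cells. $L^{\mathrm{skew}}_{A_{n-1}}(P/Q)$ is the set of semistandard tableaux $T$ of shape $P/Q$ with entries in $\{1,\dots,n\}$ (entries weakly increase left to right along rows and strictly increase top to bottom down columns), partially ordered by $S\le T$ iff $S_{r,c}\ge T_{r,c}$ for every cell $(r,c)$. The Hasse diagram edges are colored: $S\to T$ is a covering iff $S,T$ differ in exactly one cell $(r,c)$ and $S_{r,c}=T_{r,c}+1$; this edge gets color $i:=T_{r,c}\in\{1,\dots,n-1\}$, written $S\xrightarrow{i}T$. GT parallelograms: for $0\le i\le n$ put $C_i:=\{i-(m-1),\dots,i-1,i\}$. To each tableau $T$ associate the integer array $(g_{i,j}(T))_{0\le i\le n,\,j\in C_i}$ defined by $g_{i,i+1-r}(T):=Q_r+|\{c:(r,c)\in P/Q,\ T_{r,c}\le i\}|$ for $1\le r\le m$. (Thus $g_{0,j}=Q_{1-j}$, $g_{n,j}=P_{n+1-j}$, and $\max(g_{i-1,j-1},g_{i+1,j})\le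 g_{i,j}\le\min(g_{i-1,j},g_{i+1,j+1})$ whenever the indices are defined.) One has $S\xrightarrow{i}T$ iff the arrays of $S$ and $T$ agree except at exactly one position $(i,j)$, where $g_{i,j}(T)=g_{i,j}(S)+1$. Edge coefficients: for an edge $S\xrightarrow{i}T$ with differing position $(i,j)$, writing $g_{p,q}:=g_{p,q}(T)$, $$X_{T,S}:=-\frac{\prod_{k\in C_{i+1}}(g_{i,j}-g_{i+1,k}+j-k)}{\prod_{k\in C_i\setminus\{j\}}(g_{i,j}-g_{i,k}+j-k-1)},\qquad Y_{S,T}:=\frac{\prod_{k\in C_{i-1}}(g_{i,j}-g_{i-1,k}+j-k-1)}{\prod_{k\in C_i\setminus\{j\}}(g_{i,j}-g_{i,k}+j-k)}.$$ *)

(* Defs.v *)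
From HB Require Import structures.
From mathcomp Require Import all_boot all_order all_algebra.
Set Implicit Arguments. Unset Strict Implicit. Unset Printing Implicit Defensive.
Import Order.TTheory GRing.Theory Num.Theory.

(* Rows r are indexed 1..m, columns c >= 1 (matrix convention).
   P Q : nat -> nat; only the values at r = 1..m are relevant.
   A tableau is a function T : nat -> nat -> nat, T r c being the entry in
   cell (r,c); only its values on the cells of P/Q are relevant. *)

Definition in_shape (m : nat) (P Q : nat -> nat) (r c : nat) : bool :=
  (1 <= r <= m) && (Q r < c <= P r).

Definition skew_data (m n : nat) (P Q : nat -> nat) : Prop :=
  [/\ 2 <= n <= m,
      (forall r, 1 <= r < m -> P r.+1 <= P r),
      (forall r, 1 <= r < m -> Q r.+1 <= Q r),
      (forall r, 1 <= r <= m -> Q r <= P r)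
    & (forall c, (\sum_(1 <= r < m.+1 | in_shape m P Q r c) 1 <= n)%N)].

Definition ssyt (m n : nat) (P Q : nat -> nat) (T : nat -> nat -> nat) : Prop :=
  [/\ (forall r c, in_shape m P Q r c -> 1 <= T r c <= n),
      (forall r c, in_shape m P Q r c -> in_shape m P Q r c.+1 ->
         T r c <= T r c.+1)
    & (forall r c, in_shape m P Q r c -> in_shape m P Q r.+1 c ->
         T r c < T r.+1 c)].

Definition skew_edge (m n : nat) (P Q : nat -> nat)
    (S T : nat -> nat -> nat) (i : nat) : Prop :=
  [/\ ssyt m n P Q S, ssyt m n P Q T &
      exists r c, [/\ in_shape m P Q r c, S r c = (T r c).+1, T r c = i &
        forall r' c', in_shape m P Q r' c' -> (r', c') <> (r, c) ->
          S r' c' = T r' c']].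

Definition row_count (P Q : nat -> nat) (T : nat -> nat -> nat) (r i : nat)
  : nat := (\sum_((Q r).+1 <= c < (P r).+1 | T r c <= i) 1)%N.

(* GT parallelogram entry g_{i,j}(T) for j in C_i = {i-(m-1),...,i};
   g_{i,i+1-r} = Q_r + #{c : (r,c) in P/Q, T_{r,c} <= i}.  (0 outside.) *)
Definition gt_entry (m : nat) (P Q : nat -> nat) (T : nat -> nat -> nat)
    (i : nat) (j : int) : int :=
  let r := ((Posz i) + 1 - j)%R in
  if ((1 <= r) && (r <= (Posz m)))%R
  then Posz (Q `|r|%N + row_count P Q T `|r|%N i)%N else 0%R.

Definition gt_pos (m n i : nat) (j : int) : bool :=
  (i <= n) && (((Posz i) - ((Posz m) - 1) <= j) && (j <= (Posz i)))%R.

Local Open Scope ring_scope.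

Definition X_num (m : nat) (g : nat -> int -> int) (i : nat) (j : int) : rat :=
  \prod_(t < m) ((g i j - g i.+1 ((Posz i) + 1 - (Posz t)) + j - ((Posz i) + 1 - (Posz t)))%:~R).

Definition X_den (m : nat) (g : nat -> int -> int) (i : nat) (j : int) : rat :=
  \prod_(t < m | (Posz i) - (Posz t) != j)
     ((g i j - g i ((Posz i) - (Posz t)) + j - ((Posz i) - (Posz t)) - 1)%:~R).

Definition X_coef m g i j : rat := - (X_num m g i j / X_den m g i j).

Definition Y_num (m : nat) (g : nat -> int -> int) (i : nat) (j : int) : rat :=
  \prod_(t < m)
     ((g i j - g i.-1 ((Posz i) - 1 - (Posz t)) + j - ((Posz i) - 1 - (Posz t)) - 1)%:~R).

Definition Y_den (m : nat) (g : nat -> int -> int) (i : nat) (j : int) : rat :=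
  \prod_(t < m | (Posz i) - (Posz t) != j)
     ((g i j - g i ((Posz i) - (Posz t)) + j - ((Posz i) - (Posz t)))%:~R).

Definition Y_coef m g i j : rat := Y_num m g i j / Y_den m g i j.

(* Main.v *)
Require Import Defs.
From HB Require Import structures.
From mathcomp Require Import all_boot all_order all_algebra.
From mathcomp Require Import zify.
Import Order.TTheory GRing.Theory Num.Theory.

Definition LL (P Q : nat -> nat) (T : nat -> nat -> nat) (l r : nat) : nat :=
  (Q r + row_count P Q T r l)%N.

Lemma row_countE P Q T r l :
  row_count P Q T r l = count (fun c => T r c <= l) (index_iota (Q r).+1 (P r).+1).
Proof. by rewrite /row_count sum1_count. Qed.

Lemma count_le (A : eqType) (s : seq A) (p q : pred A) :
  (forall x, x \in s -> p x -> q x) -> count p s <= count q s.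
Proof.
elim: s => //= a s IH H.
have H1 : (p a <= q a)%N.
  case: (p a) (H a (mem_head _ _)) => [/(_ isT) ->|_]; [exact: leqnn | exact: leq0n].
apply: (leq_add H1); apply: IH => x xs; apply: H; by rewrite in_cons xs orbT.
Qed.

Lemma count_iota_le (M a n : nat) :
  count (fun c => c <= M) (iota a n) = minn n (M.+1 - a).
Proof.
elim: n a => [|n IH] a /=; first by rewrite min0n.
rewrite IH; case: (leqP a M) => h; lia.
Qed.

Section L.
Variables (m n : nat) (P Q : nat -> nat).
Hypothesis Hsd : skew_data m n P Q.

Lemma Lmono T l r : LL P Q T l r <= LL P Q T l.+1 r.
Proof.
rewrite /LL !row_countE leq_add2l; apply: count_le => x _ /=.
move=> h; exact: leq_trans h (leqnSn _).
Qed.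

Lemma row_chain T r c d : ssyt m n P Q T -> (1 <= r <= m)%N ->
  Q r < c -> c + d <= P r -> T r c <= T r (c + d).
Proof.
move=> [_ Hrow _] Hr Hc; elim: d => [|d IH] Hd; first by rewrite addn0.
apply: leq_trans (IH (ltnW _)) _; first by rewrite addnS in Hd.
rewrite addnS; apply: Hrow; rewrite /in_shape Hr /=; lia.
Qed.

Lemma Lge T l r c : ssyt m n P Q T -> (1 <= r <= m)%N ->
  Q r < c <= P r -> T r c <= l -> c <= LL P Q T l r.
Proof.
move=> HT Hr /andP[Hc1 Hc2] Hl.
rewrite /LL row_countE.
have : count (fun c' => c' <= c) (index_iota (Q r).+1 (P r).+1) <=
       count (fun c' => T r c' <= l) (index_iota (Q r).+1 (P r).+1).
  apply: count_le => x; rewrite mem_iota => /andP[h1 h2] h3.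
  have := @row_chain T r x (c - x) HT Hr h1.
  have -> : (x + (c - x) = c)%N by lia.
  move=> H; apply: leq_trans (H _) Hl; lia.
rewrite /index_iota count_iota_le; lia.
Qed.

Lemma Linter T l r : ssyt m n P Q T -> (1 <= r < m)%N ->
  LL P Q T l.+1 r.+1 <= LL P Q T l r.
Proof.
move=> HT Hr; case: Hsd => _ HP HQ HQP _.
have HPr := HP r Hr; have HQr := HQ r Hr.
set M := LL P Q T l r.
have HM : Q r <= M by rewrite /M /LL leq_addr.
rewrite /LL row_countE.
have : count (fun c => T r.+1 c <= l.+1) (index_iota (Q r.+1).+1 (P r.+1).+1) <=
       count (fun c => c <= M) (index_iota (Q r.+1).+1 (P r.+1).+1).
  apply: count_le => c; rewrite mem_iota => /andP[h1 h2] h3.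
  case: (leqP c M) => // hcM; exfalso.
  have hin : in_shape m P Q r c by rewrite /in_shape; apply/andP; split; lia.
  have hin' : in_shape m P Q r.+1 c by rewrite /in_shape; apply/andP; split; lia.
  have [_ _ Hcol] := HT; have hlt := Hcol r c hin hin'.
  have := @Lge T l r c HT.
  rewrite -/M; move=> H; have := H ltac:(lia) ltac:(lia) ltac:(lia); lia.
rewrite /index_iota count_iota_le; lia.
Qed.

Lemma Ldecr T l r d : ssyt m n P Q T -> (1 <= r)%N -> (r + d <= m)%N ->
  LL P Q T l (r + d) <= LL P Q T l r.
Proof.
move=> HT Hr; elim: d => [|d IH] Hd; first by rewrite addn0.
apply: (leq_trans _ (IH ltac:(lia))); rewrite addnS.
apply: (leq_trans (Lmono T l (r + d).+1)); apply: Linter => //; lia.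
Qed.

End L.

Local Open Scope ring_scope.

Lemma gtEL m P Q T (l r : nat) (k : int) : (1 <= r <= m)%N ->
  k = Posz l + 1 - Posz r -> gt_entry m P Q T l k = Posz (LL P Q T l r).
Proof.
move=> Hr ->; rewrite /gt_entry.
have -> : Posz l + 1 - (Posz l + 1 - Posz r) = Posz r by lia.
rewrite absz_nat; have -> : ((1 <= Posz r) && (Posz r <= Posz m))%R by apply/andP; split; lia.
by [].
Qed.

Lemma keyprod (m : nat) (t0 : 'I_m) (Pr : pred 'I_m) (x y : 'I_m -> rat) :
  (forall t, Pr t = (t != t0)) ->
  (forall t, t != t0 -> (x t < 0 /\ y t < 0) \/ (0 < x t /\ 0 < y t)) ->
  \prod_(t | Pr t) y t != 0 /\
  exists2 c, 0 < c & \prod_(t < m) x t / \prod_(t | Pr t) y t = x t0 * c.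
Proof.
move=> HP Hs; rewrite (eq_bigl _ _ HP); split.
  apply/prodf_neq0 => t /Hs [[_ h]|[_ h]]; [exact: ltr0_neq0 | exact: lt0r_neq0].
exists (\prod_(t | t != t0) (x t / y t)).
  apply: prodr_gt0 => t /Hs [[h1 h2]|[h1 h2]]; last exact: divr_gt0.
  by rewrite nmulr_rgt0 // invr_lt0.
by rewrite (bigD1 t0) //= big_split /= prodfV mulrA.
Qed.


Theorem lemma6p1 (m n : nat) (P Q : nat -> nat)
    (S T : nat -> nat -> nat) (i : nat) (j : int) :
  skew_data m n P Q ->
  skew_edge m n P Q S T i ->
  gt_pos m n i j ->
  gt_entry m P Q T i j = gt_entry m P Q S i j + 1 ->
  (forall (i' : nat) (j' : int), gt_pos m n i' j' -> (i', j') <> (i, j) ->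
     gt_entry m P Q T i' j' = gt_entry m P Q S i' j') ->
  [/\ X_den m (gt_entry m P Q T) i j != 0,
      Y_den m (gt_entry m P Q T) i j != 0,
      0 < X_coef m (gt_entry m P Q T) i j
    & 0 < Y_coef m (gt_entry m P Q T) i j].
Proof.
move=> Hsd [HS HT [rc [cc [Hin HSc HTc _]]]] Hpos Hdiff Hsame.
have [/andP[Hn2 Hnm] _ _ _ _] := Hsd.
have Hi1 : (1 <= i)%N.
  by have [H _ _] := HT; have := H rc cc Hin; rewrite HTc => /andP[-> _].
have Hin_n : (i < n)%N.
  by have [H _ _] := HS; have := H rc cc Hin; rewrite HSc HTc => /andP[_ ->].
move: Hpos => /andP[_ /andP[Hj1 Hj2]].
have [r0 Hr0] : exists r0 : nat, Posz i + 1 - j = Posz r0.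
  by exists (absz (Posz i + 1 - j)%R); rewrite gez0_abs //; lia.
have Hr0m : (1 <= r0 <= m)%N by lia.
have Ej : j = Posz i + 1 - Posz r0 by lia.
have HaS : LL P Q T i r0 = (LL P Q S i r0).+1.
  by move: Hdiff; rewrite !(@gtEL m P Q _ i r0 j Hr0m Ej); lia.
have gpos : forall (l r : nat), (l <= n)%N -> (1 <= r <= m)%N ->
    gt_pos m n l (Posz l + 1 - Posz r).
  by move=> l r Hl Hr; rewrite /gt_pos; apply/andP; split => //; apply/andP; split; lia.
have Hoth : forall r, (1 <= r <= m)%N -> r != r0 -> LL P Q T i r = LL P Q S i r.
  move=> r Hr Hne.
  have := Hsame i (Posz i + 1 - Posz r) (gpos _ _ (ltnW Hin_n) Hr).
  rewrite !(@gtEL m P Q _ i r _ Hr erefl) => H.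
  have : Posz (LL P Q T i r) = Posz (LL P Q S i r) by apply: H; case => h; lia.
  by case.
have Hup : forall r, (1 <= r <= m)%N -> LL P Q T i.+1 r = LL P Q S i.+1 r.
  move=> r Hr.
  have := Hsame i.+1 (Posz i.+1 + 1 - Posz r) (gpos _ _ Hin_n Hr).
  rewrite !(@gtEL m P Q _ i.+1 r _ Hr erefl) => H.
  have : Posz (LL P Q T i.+1 r) = Posz (LL P Q S i.+1 r) by apply: H; case => h; lia.
  by case.
have Hdn : forall r, (1 <= r <= m)%N -> LL P Q T i.-1 r = LL P Q S i.-1 r.
  move=> r Hr.
  have := Hsame i.-1 (Posz i.-1 + 1 - Posz r) (gpos i.-1 r ltac:(lia) Hr).
  rewrite !(@gtEL m P Q _ i.-1 r _ Hr erefl) => H.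
  have : Posz (LL P Q T i.-1 r) = Posz (LL P Q S i.-1 r) by apply: H; case => h; lia.
  by case.
have Dec : forall X l r r', ssyt m n P Q X -> (1 <= r)%N -> (r <= r')%N -> (r' <= m)%N ->
    (LL P Q X l r' <= LL P Q X l r)%N.
  move=> X l r r' HX h1 h2 h3; have := @Ldecr m n P Q Hsd X l r (r' - r) HX h1.
  by rewrite subnKC //; apply.
have Mo : forall X l r, (LL P Q X l r <= LL P Q X l.+1 r)%N.
  by move=> X l r; apply: Lmono.
have Mo' : forall X r, (LL P Q X i.-1 r <= LL P Q X i r)%N.
  by move=> X r; have := Lmono P Q X i.-1 r; rewrite prednK.
have In : forall X l r, ssyt m n P Q X -> (1 <= r < m)%N ->
    (LL P Q X l.+1 r.+1 <= LL P Q X l r)%N.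
  by move=> X l r HX Hr; apply: (@Linter m n P Q Hsd).
have In' : forall X r, ssyt m n P Q X -> (1 <= r < m)%N ->
    (LL P Q X i r.+1 <= LL P Q X i.-1 r)%N.
  by move=> X r HX Hr; have := In X i.-1 r HX Hr; rewrite prednK.
have gj := @gtEL m P Q T i r0 j Hr0m Ej.
have ht0 : (r0.-1 < m)%N by lia.
set t0 : 'I_m := Ordinal ht0.
have HPr : forall t : 'I_m, (Posz i - Posz t != j) = (t != t0).
  move=> t; congr negb; apply/eqP/eqP => [h|->]; first by apply: val_inj => /=; lia.
  by rewrite /= Ej; lia.

have gX1 : forall t : 'I_m, gt_entry m P Q T i.+1 (Posz i + 1 - Posz t) = Posz (LL P Q T i.+1 t.+1).
  by move=> t; have := ltn_ord t => ht; apply: gtEL; lia.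
have gX2 : forall t : 'I_m, gt_entry m P Q T i (Posz i - Posz t) = Posz (LL P Q T i t.+1).
  by move=> t; have := ltn_ord t => ht; apply: gtEL; lia.
have gY1 : forall t : 'I_m, gt_entry m P Q T i.-1 (Posz i - 1 - Posz t) = Posz (LL P Q T i.-1 t.+1).
  by move=> t; have := ltn_ord t => ht; apply: gtEL; lia.
have Hne : forall t : 'I_m, t != t0 -> t.+1 != r0.
  move=> t; apply: contraNneq => h; apply/eqP; apply: val_inj => /=; lia.
pose xX := fun t : 'I_m => ((gt_entry m P Q T i j - gt_entry m P Q T i.+1 (Posz i + 1 - Posz t) + j - (Posz i + 1 - Posz t))%:~R : rat).
pose yX := fun t : 'I_m => ((gt_entry m P Q T i j - gt_entry m P Q T i (Posz i - Posz t) + j - (Posz i - Posz t) - 1)%:~R : rat).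
pose xY := fun t : 'I_m => ((gt_entry m P Q T i j - gt_entry m P Q T i.-1 (Posz i - 1 - Posz t) + j - (Posz i - 1 - Posz t) - 1)%:~R : rat).
pose yY := fun t : 'I_m => ((gt_entry m P Q T i j - gt_entry m P Q T i (Posz i - Posz t) + j - (Posz i - Posz t))%:~R : rat).
have sX : forall t : 'I_m, t != t0 -> (xX t < 0 /\ yX t < 0) \/ (0 < xX t /\ 0 < yX t).
  move=> t Ht; have ht := ltn_ord t; have hn := Hne t Ht.
  rewrite /xX /yX !ltrz0 !ltr0z gX1 gX2 gj.
  case: (ltnP t.+1 r0) => hlt.
    left; have f1 := Mo T i t.+1; have f2 := Dec T i t.+1 r0 HT ltac:(lia) ltac:(lia) ltac:(lia).
    split; lia.
  right; have e1 := Hup t.+1 ltac:(lia); have f1 := In S i t HS ltac:(lia).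
  have f2 := Dec S i r0 t HS ltac:(lia) ltac:(lia) ltac:(lia).
  have e2 := Hoth t.+1 ltac:(lia) hn.
  have f3 := Dec S i r0 t.+1 HS ltac:(lia) ltac:(lia) ltac:(lia).
  split; lia.
have [XD [cX cXpos XE]] := @keyprod m t0 (fun t : 'I_m => Posz i - Posz t != j) xX yX HPr sX.
have sY : forall t : 'I_m, t != t0 -> (xY t < 0 /\ yY t < 0) \/ (0 < xY t /\ 0 < yY t).
  move=> t Ht; have ht := ltn_ord t; have hn := Hne t Ht.
  rewrite /xY /yY !ltrz0 !ltr0z gY1 gX2 gj.
  case: (ltnP t.+1 r0) => hlt.
    left; have f1 := In' T t.+1 HT ltac:(lia).
    have f2 := Dec T i t.+2 r0 HT ltac:(lia) ltac:(lia) ltac:(lia).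
    have f3 := Dec T i t.+1 r0 HT ltac:(lia) ltac:(lia) ltac:(lia).
    split; lia.
  right; have e1 := Hdn t.+1 ltac:(lia); have f1 := Mo' S t.+1.
  have f2 := Dec S i r0 t.+1 HS ltac:(lia) ltac:(lia) ltac:(lia).
  have f3 := Dec T i r0 t.+1 HT ltac:(lia) ltac:(lia) ltac:(lia).
  split; lia.
have [YD [cY cYpos YE]] := @keyprod m t0 (fun t : 'I_m => Posz i - Posz t != j) xY yY HPr sY.
have et0 : (nat_of_ord t0).+1 = r0 by rewrite /= prednK //; lia.
split => //.
- rewrite /X_coef.
  change (0 < - (\prod_(t < m) xX t / \prod_(t < m | Posz i - Posz t != j) yX t)).
  rewrite XE -mulNr; apply: mulr_gt0 => //.
  rewrite oppr_gt0 /xX ltrz0 gX1 gj et0.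
  have f1 := Mo T i r0; lia.
- rewrite /Y_coef.
  change (0 < (\prod_(t < m) xY t / \prod_(t < m | Posz i - Posz t != j) yY t)).
  rewrite YE; apply: mulr_gt0 => //.
  rewrite /xY ltr0z gY1 gj et0.
  have e1 := Hdn r0 Hr0m; have f1 := Mo' S r0; lia.
Qed.
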